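(* Let $m\ge1$, $N=2^m$, let $\mathcal{A}\subseteq[0,N-1]$ be nonempty such that the monomial set $\mathcal{I}=\{\mathbf{x}^{\mathrm{bin}(N-1-i)}:i\in\mathcal{A}\}$ is decreasing, and suppose the code $\mathcal{C}_{\boldsymbol{G}_N}(\mathcal{A})$ has minimum distance $2^{m-r}$. Let $\mathbf{P}\in\mathbb{F}_2^{N\times N}$ be upper triangular with unit diagonal. Then the minimum distance of $\mathcal{C}_{\mathbf{P}\boldsymbol{G}_N}(\mathcal{A})$ is also $2^{m-r}$, and the number of codewords of $\mathcal{C}_{\mathbf{P}\boldsymbol{G}_N}(\mathcal{A})$ of Hamming weight $2^{m-r}$ is at least $2^r$.
   Context: $\boldsymbol{G}_N=\begin{pmatrix}1&0\\1&1\end{pmatrix}^{\otimes m}$ over $\mathbb{F}_2$, rows/columns indexed by $0,\dots,N-1$; $\mathcal{C}_{\mathbf{B}}(\mathcal{S})$ is the code spanned by the rows of $\mathbf{B}$ indexed by $\mathcal{S}$. For $i\in[0,N-1]$, $\mathrm{bin}(i)=(i_0,\dots,i_{m-1})$ with $i=\sum_j i_j2^j$, $\mathbf{x}^{b}=\prod_jx_j^{b_j}$; row $i$ of $\boldsymbol{G}_N$ is the evaluation vector of $\mathbf{x}^{\mathrm{bin}(N-1-i)}$ on $\mathbb{F}_2^m$. Order on monomials: $f\preceq_w g$ iff $f\mid g$; for $f=x_{i_1}\cdots x_{i_s}$, $g=x_{j_1}\cdots x_{j_s}$ with $i_1<\dots<i_s$, $j_1<\dots<j_s$, $f\preceq_{sh}g$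 iff $i_\ell\le j_\ell$ for all $\ell$; $f\preceq g$ iff some monomial $g^*$ satisfies $f\preceq_{sh}g^*\preceq_w g$. A set $\mathcal{I}$ of monomials is decreasing if $f\in\mathcal{I}$, $g\preceq f$ imply $g\in\mathcal{I}$. *)

(* Defs.v *)
From HB Require Import structures.
From mathcomp Require Import all_boot all_order all_algebra.
Set Implicit Arguments. Unset Strict Implicit. Unset Printing Implicit Defensive.
Import Order.TTheory GRing.Theory.
Local Open Scope ring_scope.

(* The 2x2 kernel [[1,0],[1,1]] over F_2, indexed by a,b in {0,1}. *)
Definition kern2 (a b : nat) : 'F_2 := if (a == 0%N) && (b == 1%N) then 0 else 1.

(* Entries of the m-fold Kronecker power  K^{(x) m}, with K^{(x) (m+1)} = K (x) K^{(x) m}: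
   (A (x) B)(i,j) = A(i div n, j div n) * B(i mod n, j mod n), n = size of B. *)
Fixpoint kron_pow_entry (m i j : nat) : 'F_2 :=
  match m with
  | 0%N => 1
  | m'.+1 => kern2 (i %/ 2 ^ m') (j %/ 2 ^ m') *
             kron_pow_entry m' (i %% 2 ^ m') (j %% 2 ^ m')
  end.

Definition GN (m : nat) : 'M['F_2]_(2 ^ m) :=
  \matrix_(i, j) kron_pow_entry m i j.

Definition row_code (n : nat) (B : 'M['F_2]_n) (S : {set 'I_n}) : {set 'rV['F_2]_n} :=
  [set c | [exists u : {ffun 'I_n -> 'F_2}, c == \sum_(i in S) u i *: row i B]].

Definition wt (n : nat) (c : 'rV['F_2]_n) : nat := #|[set j : 'I_n | c 0 j != 0]|.

Definition has_min_dist (n : nat) (C : {set 'rV['F_2]_n}) (d : nat) : Prop :=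
  (exists2 c, c \in C & (c != 0) && (wt c == d)) /\
  (forall c, c \in C -> c != 0 -> (d <= wt c)%N).

(* Monomials in x_0..x_{m-1} over F_2 (exponents in {0,1}) are represented
   by their support: x^b  <->  {k | b_k = 1}. *)
Definition monomial (m : nat) := {set 'I_m}.

(* x^{bin(N-1-i)}: the set of positions k with bit k of N-1-i equal to 1. *)
Definition mono_of_index (m : nat) (i : 'I_(2 ^ m)) : monomial m :=
  [set k : 'I_m | odd ((2 ^ m - 1 - i) %/ 2 ^ k)].

Definition vars (m : nat) (f : monomial m) : seq nat := map val (enum f).

(* f <=_w g  iff  f | g *)
Definition le_w (m : nat) (f g : monomial m) : bool := f \subset g.

Definition le_sh (m : nat) (f g : monomial m) : bool :=
  (#|f| == #|g|) &&
  [forall l : 'I_m, (l < #|f|)%N ==> (nth 0%N (vars f) l <= nth 0%N (vars g) l)%N].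

Definition mono_le (m : nat) (f g : monomial m) : Prop :=
  exists gs : monomial m, le_sh f gs && le_w gs g.

Definition decreasing (m : nat) (I : {set monomial m}) : Prop :=
  forall f g : monomial m, f \in I -> mono_le g f -> g \in I.

Definition upper_unitriangular (n : nat) (P : 'M['F_2]_n) : Prop :=
  (forall i j : 'I_n, (j < i)%N -> P i j = 0) /\ (forall i : 'I_n, P i i = 1).

(* Main.v *)
Require Import Defs.
From mathcomp Require Import all_boot all_order all_algebra.
From mathcomp Require Import zify.
Set Implicit Arguments. Unset Strict Implicit. Unset Printing Implicit Defensive.
Import GRing.Theory.


Notation E := kron_pow_entry.

Definition wtf (n : nat) (f : nat -> 'F_2) : nat := count (fun k => f k != 0%R) (iota 0 n).

Lemma divP_hi m k : (k < 2 ^ m)%N -> ((2 ^ m + k) %/ 2 ^ m = 1)%N.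
Proof. move=> hk; rewrite -{1}(mul1n (2^m)) divnMDl ?expn_gt0 // divn_small //. Qed.
Lemma modP_hi m k : (k < 2 ^ m)%N -> ((2 ^ m + k) %% 2 ^ m = k)%N.
Proof. move=> hk; rewrite -{1}(mul1n (2^m)) modnMDl modn_small //. Qed.

Lemma E_lo m i k : (k < 2 ^ m)%N -> E m.+1 i k = E m (i %% 2 ^ m) k.
Proof.
move=> hk /=; rewrite (divn_small hk) (modn_small hk) /kern2.
by rewrite andbF mul1r.
Qed.

Lemma E_hi m i k : (k < 2 ^ m)%N ->
  E m.+1 i (2 ^ m + k) = if (i %/ 2 ^ m == 0)%N then 0%R else E m (i %% 2 ^ m) k.
Proof.
move=> hk /=; rewrite divP_hi // modP_hi // /kern2 /=.
by case: eqP => _ /=; rewrite ?mul0r ?mul1r.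
Qed.

Lemma wtf_split m f : wtf (2 ^ m.+1) f = (wtf (2 ^ m) f + wtf (2 ^ m) (fun k => f (2 ^ m + k)%N))%N.
Proof.
rewrite /wtf expnS mul2n -addnn iotaD count_cat add0n.
have -> : iota (2^m) (2^m) = map (addn (2^m)) (iota 0 (2^m)) by rewrite -iotaDl addn0.
by rewrite count_map.
Qed.

Lemma wtf_eq n f g : (forall k, (k < n)%N -> f k = g k) -> wtf n f = wtf n g.
Proof.
move=> h; apply: eq_in_count => k; rewrite mem_iota add0n => /andP[_ hk].
by rewrite h.
Qed.

Lemma wtf_tri n (a b : nat -> 'F_2) :
  (wtf n a <= wtf n (fun k => a k + b k)%R + wtf n b)%N.
Proof.
rewrite /wtf -count_predUI.
apply: leq_trans (leq_addr _ _).
apply: sub_count => k /=.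
case: (b k =P 0%R) => [->|_]; rewrite ?addr0 ?orbT //.
by move=> ->.
Qed.

Lemma CL m : forall i (v : nat -> 'F_2), (i < 2 ^ m)%N ->
  (wtf (2 ^ m) (E m i) <=
   wtf (2 ^ m) (fun k => E m i k + \sum_(i.+1 <= j < 2 ^ m) v j * E m j k)%R)%N.
Proof.
elim: m => [|m IH] i v hi.
  rewrite expn0 in hi *; have -> : i = 0%N by lia.
  by apply: eq_leq; apply: wtf_eq => k _; rewrite big_geq // addr0.

set P := (2 ^ m)%N.
have hP : (0 < P)%N by rewrite expn_gt0.
have e2 : (2 ^ m.+1 = P + P)%N by rewrite expnS /P; lia.
rewrite !wtf_split -/P.
rewrite (@wtf_eq P (E m.+1 i) (E m (i %% P))); last by move=> k hk; rewrite E_lo.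
rewrite (@wtf_eq P (fun k => E m.+1 i (P + k)) (fun k => if (i %/ P == 0)%N then 0%R else E m (i %% P) k)); last by move=> k hk; rewrite E_hi.
rewrite (@wtf_eq P (fun k => E m.+1 i k + \sum_(i.+1 <= j < 2 ^ m.+1) v j * E m.+1 j k)%R (fun k => E m (i %% P) k + \sum_(i.+1 <= j < 2 ^ m.+1) v j * E m (j %% P) k)%R); last first.
  by move=> k hk; cbv beta; rewrite E_lo //; congr (_ + _)%R; apply: eq_bigr => j _; rewrite E_lo.
rewrite (@wtf_eq P (fun k => E m.+1 i (P + k) + \sum_(i.+1 <= j < 2 ^ m.+1) v j * E m.+1 j (P + k))%R (fun k => (if (i %/ P == 0)%N then 0 else E m (i %% P) k) + \sum_(i.+1 <= j < 2 ^ m.+1) v j * (if (j %/ P == 0)%N then 0 else E m (j %% P) k))%R); last first.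
  by move=> k hk; cbv beta; rewrite E_hi //; congr (_ + _)%R; apply: eq_bigr => j _; rewrite E_hi.
rewrite e2.
case: (ltnP i P) => hiP.
  have -> : (i %/ P = 0)%N by rewrite divn_small.
  have -> : (i %% P = i)%N by rewrite modn_small.
  rewrite /=.
  have -> : wtf P (fun _ => 0%R) = 0%N by rewrite /wtf count_pred0.
  rewrite addn0.
  set b := (fun k => \sum_(P <= j < P + P) v j * E m (j %% P) k)%R.
  set a := (fun k => E m i k + \sum_(i.+1 <= j < P) v j * E m j k)%R.
  apply: leq_trans (IH i v hiP) _.
  rewrite -/P -/a.
  rewrite (@wtf_eq P (fun k => E m i k + \sum_(i.+1 <= j < P + P) v j * E m (j %% P) k)%R (fun k => a k + b k)%R); last first.
    move=> k hk; rewrite /a /b (@big_cat_nat _ _ _ P) //= ?addrA; last by lia.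
    congr (_ + _ + _)%R; apply: eq_big_nat => j /andP[_ hj].
    by rewrite modn_small.
  rewrite (@wtf_eq P (fun k => 0 + _)%R b); last first.
    move=> k hk; rewrite add0r /b (@big_cat_nat _ _ _ P) //=; last by lia.
    rewrite big1_seq ?add0r; last first.
      move=> j; rewrite mem_index_iota => hj.
      rewrite divn_small /=; [by rewrite mulr0 | lia].
    apply: eq_big_nat => j /andP[h1 h2].
    have -> : (j %/ P == 0)%N = false by apply/negbTE; rewrite -lt0n divn_gt0.
    done.
  exact: wtf_tri.
have hq : (i %/ P = 1)%N.
  apply/eqP; rewrite eqn_leq; apply/andP; split.
    by rewrite -ltnS ltn_divLR // mul2n -addnn -e2.
  by rewrite divn_gt0.
rewrite hq /=.
set i' := (i %% P)%N.
have hi' : (i' < P)%N by rewrite ltn_mod.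
have ei : (i = P + i')%N by rewrite {1}(divn_eq i P) hq mul1n.
have hs : forall k, (k < P)%N -> (\sum_(i.+1 <= j < P + P) v j * E m (j %% P) k = \sum_(i'.+1 <= j < P) v (j + P)%N * E m j k)%R.
  move=> k hk.
  have -> : (i.+1 = i'.+1 + P)%N by lia.
  rewrite big_addn.
  have -> : (P + P - P = P)%N by lia.
  apply: eq_big_nat => j /andP[_ hj].
  by rewrite modnDr modn_small.
rewrite (@wtf_eq P (fun k => E m i' k + \sum_(i.+1 <= j < P + P) v j * E m (j %% P) k)%R (fun k => E m i' k + \sum_(i'.+1 <= j < P) v (j + P)%N * E m j k)%R); last by move=> k hk; rewrite hs.
rewrite (@wtf_eq P (fun k => E m i' k + \sum_(i.+1 <= j < P + P) v j * (if (j %/ P)%N == 0%N then 0 else E m (j %% P) k))%R (fun k => E m i' k + \sum_(i'.+1 <= j < P) v (j + P)%N * E m j k)%R); last first.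
  move=> k hk; rewrite -hs //; congr (_ + _)%R.
  apply: eq_big_nat => j /andP[h1 h2].
  have -> : (j %/ P == 0)%N = false by apply/negbTE; rewrite -lt0n divn_gt0 //; lia.
  done.
by apply: leq_add; apply: IH.
Qed.

Lemma cardI (m : nat) (P : nat -> bool) : #|[set k : 'I_m | P k]| = count P (iota 0 m).
Proof.
by rewrite -val_enum_ord count_map enumT cardsE cardE /enum_mem size_filter.
Qed.

Lemma bit_mod m k x : k < m -> odd ((x %% 2 ^ m) %/ 2 ^ k) = odd (x %/ 2 ^ k).
Proof.
move=> hk.
have e2 : 2 ^ m = 2 ^ (m - k) * 2 ^ k by rewrite -expnD subnK // ltnW.
have ex : x = (x %/ 2 ^ m * 2 ^ (m - k)) * 2 ^ k + x %% 2 ^ m.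
  by rewrite -mulnA -e2 -divn_eq.
transitivity (odd (((x %/ 2 ^ m * 2 ^ (m - k)) * 2 ^ k + x %% 2 ^ m) %/ 2 ^ k)); last by rewrite -ex.
rewrite divnMDl ?expn_gt0 // oddD oddM oddX.
have -> : (m - k == 0) = false by apply/negbTE; rewrite subn_eq0 -ltnNge.
by rewrite andbF.
Qed.

Lemma bit_compl m : forall i k, i < 2 ^ m -> k < m ->
  odd ((2 ^ m - 1 - i) %/ 2 ^ k) = ~~ odd (i %/ 2 ^ k).
Proof.
elim: m => [|m IH] i k hi hk; first by [].
case: k hk => [|k] hk.
  rewrite expn0 !divn1 -subnDA oddB; last by lia.
  by rewrite oddX /= add0n.
rewrite [2 ^ k.+1]expnS !divnMA.
have -> : (2 ^ m.+1 - 1 - i) %/ 2 = 2 ^ m - 1 - i %/ 2.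
  rewrite expnS; set P := 2 ^ m; lia.
apply: IH => //.
rewrite expnS in hi; lia.
Qed.

Lemma bit_inj m : forall x y, x < 2 ^ m -> y < 2 ^ m ->
  (forall k, k < m -> odd (x %/ 2 ^ k) = odd (y %/ 2 ^ k)) -> x = y.
Proof.
elim: m => [|m IH] x y hx hy h.
  rewrite expn0 in hx hy; lia.
have h0 := h 0 (ltn0Sn _); rewrite expn0 !divn1 in h0.
have h2 : x %/ 2 = y %/ 2.
  apply: IH; try (rewrite expnS in hx hy; lia).
  move=> k hk; have := h k.+1 hk; by rewrite expnS !divnMA.
rewrite (divn_eq x 2) (divn_eq y 2) !modn2 h0 h2 //.
Qed.

Definition pop m i := count (fun k => odd (i %/ 2 ^ k)) (iota 0 m).

Lemma pop_mod m i : pop m (i %% 2 ^ m) = pop m i.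
Proof.
apply: eq_in_count => k; rewrite mem_iota add0n => /andP[_ hk].
by rewrite bit_mod.
Qed.

Lemma popS m i : pop m.+1 i = pop m i + odd (i %/ 2 ^ m).
Proof. by rewrite /pop -[m.+1]addn1 iotaD count_cat /= add0n addn0. Qed.

Lemma wt_row m : forall i, i < 2 ^ m -> wtf (2 ^ m) (E m i) = 2 ^ pop m i.
Proof.
elim: m => [|m IH] i hi.
  rewrite expn0 in hi; have -> : i = 0 by lia.
  by rewrite /wtf /= /pop /=.
set P := 2 ^ m.
have hP : 0 < P by rewrite expn_gt0.
rewrite wtf_split -/P popS -pop_mod.
rewrite (@wtf_eq P (E m.+1 i) (E m (i %% P))); last by move=> k hk; rewrite E_lo.
rewrite (@wtf_eq P (fun k => E m.+1 i (P + k)) (fun k => if (i %/ P == 0)%N then 0%R else E m (i %% P) k)); last by move=> k hk; rewrite E_hi.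
rewrite IH ?ltn_mod //.
case: (ltnP i P) => hiP.
  rewrite divn_small //= addn0.
  by rewrite /wtf count_pred0 addn0.
have hq : (i %/ P = 1)%N.
  apply/eqP; rewrite eqn_leq; apply/andP; split.
    by rewrite -ltnS ltn_divLR //; move: hi; rewrite expnS -/P; lia.
  by rewrite divn_gt0.
rewrite hq /= IH ?ltn_mod // addn1 expnS -/P; lia.
Qed.

Lemma E_diag m i : E m i i = 1%R.
Proof.
elim: m i => [|m IH] i //=.
rewrite IH mulr1 /kern2.
by case: eqP => // ->.
Qed.

Lemma div2P P x : 0 < P -> x < 2 * P -> x %/ P = (P <= x).
Proof.
move=> hP hx; case: leqP => h.
  apply/eqP; rewrite eqn_leq divn_gt0 // h andbT -ltnS ltn_divLR //.
by rewrite divn_small.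
Qed.

Lemma E_tri m : forall i j, i < 2 ^ m -> j < 2 ^ m -> i < j -> E m i j = 0%R.
Proof.
elim: m => [|m IH] i j hi hj hij; first by rewrite expn0 in hi hj; lia.
rewrite /=.
set P := 2 ^ m.
have hP : 0 < P by rewrite expn_gt0.
rewrite expnS -/P in hi hj.
have ei := divn_eq i P; have ej := divn_eq j P.
have hri : i %% P < P by rewrite ltn_mod.
have hrj : j %% P < P by rewrite ltn_mod.
rewrite (div2P hP hi) (div2P hP hj) in ei ej *.
case: (leqP P i) => h1; case: (leqP P j) => h2 /= in ei ej *.
- rewrite IH ?mulr0 //; lia.
- lia.
- by rewrite /kern2 /= mul0r.
- rewrite IH ?mulr0 //; lia.
Qed.

Lemma E_split p q : forall i j, i < 2 ^ (p + q) -> j < 2 ^ (p + q) ->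
  E (p + q) i j = (E p (i %/ 2 ^ q) (j %/ 2 ^ q) * E q (i %% 2 ^ q) (j %% 2 ^ q))%R.
Proof.
elim: p => [|p IH] i j hi hj.
  by rewrite add0n in hi hj *; rewrite !modn_small // mul1r.
rewrite addSn /=.
have hpq : 0 < 2 ^ (p + q) by rewrite expn_gt0.
rewrite IH ?ltn_mod // mulrA.
have e1 : forall x, x %/ 2 ^ (p + q) = x %/ 2 ^ q %/ 2 ^ p.
  by move=> x; rewrite -divnMA -expnD addnC.
have e2 : forall x, x %% 2 ^ (p + q) %/ 2 ^ q = x %/ 2 ^ q %% 2 ^ p.
  by move=> x; rewrite modn_divl -expnD.
have e3 : forall x, x %% 2 ^ (p + q) %% 2 ^ q = x %% 2 ^ q.
  by move=> x; rewrite (@modn_dvdm (2 ^ (p + q))) // expnD dvdn_mull.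
by rewrite !e1 !e2 !e3.
Qed.

Lemma E_top p x : x < 2 ^ p -> E p (2 ^ p - 1) x = 1%R.
Proof.
elim: p x => [|p IH] x hx //=.
have hP : 0 < 2 ^ p by rewrite expn_gt0.
have e : 2 ^ p.+1 - 1 = 1 * 2 ^ p + (2 ^ p - 1) by rewrite expnS; lia.
have h1 : 2 ^ p - 1 < 2 ^ p by lia.
rewrite e divnMDl // modnMDl (divn_small h1) (modn_small h1).
rewrite IH ?ltn_mod // mulr1 /kern2 /=.
done.
Qed.

Lemma E_block m r t k : r <= m -> t < 2 ^ r -> k < 2 ^ m ->
  E m (2 ^ m - 2 ^ r + t) k = E r t (k %% 2 ^ r).
Proof.
move=> hr ht hk.
have em : m = (m - r) + r by rewrite subnK.
have e2 : 2 ^ m = 2 ^ (m - r) * 2 ^ r by rewrite -expnD -em.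
have hR : 0 < 2 ^ (m - r) by rewrite expn_gt0.
have hRr : 0 < 2 ^ r by rewrite expn_gt0.
have ei : 2 ^ m - 2 ^ r + t = (2 ^ (m - r) - 1) * 2 ^ r + t by rewrite e2 mulnBl mul1n.
rewrite em E_split -?em; last first.
- done.
- have : 2 ^ r <= 2 ^ m by rewrite e2 leq_pmull.
  lia.
rewrite ei divnMDl // modnMDl (divn_small ht) (modn_small ht) addn0.
rewrite E_top ?mul1r // ltn_divLR // -e2 //.
Qed.

Lemma vars_enum m (S : {set 'I_m}) : vars S = [seq val i | i <- enum 'I_m & i \in S].
Proof. by rewrite enumT /vars /enum_mem. Qed.

Lemma vars_sorted m (S : {set 'I_m}) : sorted ltn (vars S).
Proof.
rewrite vars_enum; apply: (subseq_sorted ltn_trans _ (iota_ltn_sorted 0 m)).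
rewrite -val_enum_ord; apply: map_subseq; exact: filter_subseq.
Qed.

Lemma vars_set m (p : pred nat) : vars [set k : 'I_m | p k] = filter p (iota 0 m).
Proof.
rewrite vars_enum -val_enum_ord filter_map; congr map.
by apply: eq_filter => k; rewrite inE.
Qed.

Lemma path_nth s : forall a, path ltn a s -> forall l, l < size s -> a + l < nth 0 s l.
Proof.
elim: s => [|x s IH] a //= /andP[hax hp] [|l] hl //=.
  by rewrite addn0.
have := IH x hp l hl; lia.
Qed.

Lemma sorted_nth s l : sorted ltn s -> l < size s -> l <= nth 0 s l.
Proof.
case: s => [|x s] //= hp; case: l => [|l] //= hl.
have := path_nth hp hl; lia.
Qed.

Lemma filter_lt r m : r <= m -> filter (fun k => k < r) (iota 0 m) = iota 0 r.
Proof.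
move=> hr; rewrite -(subnKC hr) iotaD filter_cat add0n.
rewrite (@eq_in_filter _ _ predT); last by move=> k; rewrite mem_iota.
rewrite filter_predT (@eq_in_filter _ _ pred0); last first.
  by move=> k; rewrite mem_iota /= => /andP[h _]; rewrite ltnNge h.
by rewrite filter_pred0 cats0.
Qed.

Lemma le_sh_refl m (f : monomial m) : le_sh f f.
Proof.
rewrite /le_sh eqxx /=; apply/forallP => l; exact/implyP.
Qed.

Lemma le_sh_low m r (S : monomial m) : r <= m -> #|S| = r ->
  le_sh [set k : 'I_m | k < r] S.
Proof.
move=> hr hS.
have hc : #|[set k : 'I_m | k < r]| = r.
  by rewrite (cardI m (fun k => k < r)) -size_filter filter_lt // size_iota.
rewrite /le_sh hc hS eqxx /=; apply/forallP => l; apply/implyP => hl.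
rewrite (vars_set m (fun k => k < r)) filter_lt // nth_iota // add0n.
apply: sorted_nth; first exact: vars_sorted.
by rewrite /vars size_map -cardE hS.
Qed.

Lemma mono_card m (i : 'I_(2 ^ m)) : #|mono_of_index i| = m - pop m i.
Proof.
rewrite /mono_of_index (cardI m (fun k => odd ((2 ^ m - 1 - i) %/ 2 ^ k))).
rewrite (@eq_in_count _ _ (predC (fun k => odd (i %/ 2 ^ k)))); last first.
  by move=> k; rewrite mem_iota add0n /= => hk; rewrite bit_compl.
have := count_predC (fun k => odd (i %/ 2 ^ k)) (iota 0 m).
rewrite size_iota /pop; move: (count (fun k => odd (i %/ 2 ^ k)) (iota 0 m)) (count (predC (fun k => odd (i %/ 2 ^ k))) (iota 0 m)) => a b; lia.
Qed.

Lemma mono_istar m r (i : 'I_(2 ^ m)) : r <= m -> val i = 2 ^ m - 2 ^ r ->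
  mono_of_index i = [set k : 'I_m | k < r].
Proof.
move=> hr hi.
have h1 : 2 ^ r <= 2 ^ m by apply: leq_pexp2l.
have h2 : 0 < 2 ^ r by rewrite expn_gt0.
have e : 2 ^ m - 1 - i = 2 ^ r - 1 - 0 by rewrite hi; lia.
apply/setP => k; rewrite !inE e.
case: (ltnP k r) => hk.
  by rewrite bit_compl // div0n.
have h3 : 2 ^ r <= 2 ^ k by apply: leq_pexp2l.
have h4 : 2 ^ r - 1 - 0 < 2 ^ k by lia.
by rewrite (divn_small h4).
Qed.

Lemma mono_top m r (j : 'I_(2 ^ m)) : r <= m -> 2 ^ m - 2 ^ r <= j ->
  mono_of_index j \subset [set k : 'I_m | k < r].
Proof.
move=> hr hj; apply/subsetP => k; rewrite !inE.
case: (ltnP k r) => // hk.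
have h1 : 2 ^ r <= 2 ^ k by apply: leq_pexp2l.
have h2 := ltn_ord j.
rewrite divn_small //; lia.
Qed.

Lemma mono_index_inj m (i j : 'I_(2 ^ m)) : mono_of_index i = mono_of_index j -> i = j.
Proof.
move=> e; apply: val_inj => /=.
have hi := ltn_ord i; have hj := ltn_ord j.
suff : 2 ^ m - 1 - i = 2 ^ m - 1 - j by lia.
apply: (@bit_inj m); try lia.
move=> k hk.
have := congr1 (fun S : {set 'I_m} => Ordinal hk \in S) e.
by rewrite /mono_of_index !inE.
Qed.

Lemma F2_1 (x : 'F_2) : x != 0%R -> x = 1%R.
Proof. by case: x => [[|[|k]]] // hk _; apply: val_inj. Qed.

Lemma wt_nat n (c : 'rV['F_2]_n) (f : nat -> 'F_2) :
  (forall k : 'I_n, c 0%R k = f k) -> wt c = wtf n f.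
Proof.
move=> h; rewrite /wt /wtf -(cardI n (fun k => f k != 0%R)).
by apply: eq_card => k; rewrite !inE h.
Qed.

Lemma row_sum_entry n (B : 'M['F_2]_n) (S : {set 'I_n}) (u : {ffun 'I_n -> 'F_2}) k :
  (\sum_(i in S) u i *: row i B)%R 0%R k = (\sum_(i in S) u i * B i k)%R.
Proof. by rewrite summxE; apply: eq_bigr => i _; rewrite !mxE. Qed.

Lemma code_entry m (P' : 'M['F_2]_(2 ^ m)) (S : {set 'I_(2 ^ m)}) (u : {ffun 'I_(2 ^ m) -> 'F_2}) k :
  (\sum_(i in S) u i *: row i (P' *m GN m))%R 0%R k =
  (\sum_(l < 2 ^ m) (\sum_(i in S) u i * P' i l) * E m l k)%R.
Proof.
rewrite row_sum_entry.
under eq_bigr => i _ do rewrite mxE mulr_sumr.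
rewrite exchange_big /=; apply: eq_bigr => l _.
rewrite mulr_suml; apply: eq_bigr => i _.
by rewrite mxE mulrA.
Qed.

Lemma K m (A : {set 'I_(2 ^ m)}) (P' : 'M['F_2]_(2 ^ m)) c :
  upper_unitriangular P' -> c \in row_code (P' *m GN m) A -> c != 0%R ->
  exists2 i0, i0 \in A & wt (row i0 (GN m)) <= wt c.
Proof.
move=> [Plo Pd]; rewrite inE => /existsP[u /eqP ->] hc.
set S := [set i in A | u i != 0%R].
case: (set_0Vmem S) => [S0 | [i1 hi1]].
  case/negP: hc; apply/eqP; apply: big1 => i hi.
  have : i \notin S by rewrite S0 inE.
  by rewrite inE hi /= negbK => /eqP ->; rewrite scale0r.
case: (arg_minnP (fun i : 'I_(2 ^ m) => val i) hi1) => i0 hi0 hmin.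
have hi0S : i0 \in S by [].
have hi0A : i0 \in A by move: hi0S; rewrite inE => /andP[].
exists i0 => //.
set w := fun l : 'I_(2 ^ m) => (\sum_(i in A) u i * P' i l)%R.
set wN := fun j : nat => w (insubd i0 j).
have hw0 : forall l : 'I_(2 ^ m), l < i0 -> w l = 0%R.
  move=> l hl; apply: big1 => i hiA.
  case: (u i =P 0%R) => [->|/eqP hu]; first by rewrite mul0r.
  have : i \in S by rewrite inE hiA.
  by move/hmin => hi; rewrite Plo ?mulr0 //; apply: leq_trans hl hi.
have hw1 : w i0 = 1%R.
  rewrite /w (bigD1 i0) //= Pd mulr1 big1 ?addr0; last first.
    move=> i /andP[hiA hne].
    case: (u i =P 0%R) => [->|/eqP hu]; first by rewrite mul0r.
    have : i \in S by rewrite inE hiA.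
    by move/hmin => hi; rewrite Plo ?mulr0 // ltn_neqAle hi andbT eq_sym.
  by apply: F2_1; move: hi0S; rewrite inE => /andP[].
have hr : wt (row i0 (GN m)) = wtf (2 ^ m) (E m i0).
  by apply: wt_nat => k; rewrite !mxE.
rewrite hr.
rewrite (@wt_nat _ _ (fun k => E m i0 k + \sum_(i0.+1 <= j < 2 ^ m) wN j * E m j k)%R); last first.
  move=> k; rewrite code_entry.
  have -> : (\sum_(l < 2 ^ m) (\sum_(i in A) u i * P' i l) * E m l k =
             \sum_(l < 2 ^ m) wN l * E m l k)%R.
    by apply: eq_bigr => l _; rewrite /wN valKd.
  rewrite -(big_mkord xpredT (fun l => wN l * E m l k)%R).
  rewrite (@big_cat_nat _ _ _ i0) //=; last exact: ltnW.
  rewrite (@big_ltn _ _ _ i0 (2 ^ m)) // big1_seq ?add0r; last first.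
    move=> j /andP[_]; rewrite mem_index_iota => /andP[_ hj].
    rewrite /wN hw0 ?mul0r // val_insubd.
    have hjn : j < 2 ^ m by apply: ltn_trans hj _.
    by rewrite hjn.
  by rewrite /wN valKd hw1 mul1r.
exact: CL.
Qed.

Lemma inner_shift (n s0 R : nat) (wN uN : nat -> 'F_2) (F : nat -> 'F_2) :
  n = s0 + R -> (forall i, i < s0 -> wN i = 0%R) ->
  (forall s, s < R -> wN (s + s0) = uN s) ->
  (\sum_(0 <= i < n) wN i * F i = \sum_(0 <= s < R) uN s * F (s + s0))%R.
Proof.
move=> hn h0 h1; rewrite hn (@big_cat_nat _ _ _ s0) //=; last exact: leq_addr.
rewrite big1_seq ?add0r; last first.
  move=> j /andP[_]; rewrite mem_index_iota => /andP[_ hj].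
  by rewrite h0 ?mul0r.
rewrite -{1}[s0]add0n big_addn.
have -> : s0 + R - s0 = R by lia.
apply: eq_big_nat => s /andP[_ hs]; by rewrite h1.
Qed.

Lemma outer_shift (n s0 R : nat) (uN : nat -> 'F_2) (PN : nat -> nat -> 'F_2) (G : nat -> 'F_2) :
  n = s0 + R -> (forall s l, s < R -> l < s0 -> PN (s + s0) l = 0%R) ->
  (\sum_(0 <= l < n) (\sum_(0 <= s < R) uN s * PN (s + s0) l) * G l =
   \sum_(0 <= t < R) (\sum_(0 <= s < R) uN s * PN (s + s0) (t + s0)) * G (t + s0))%R.
Proof.
move=> hn h0; rewrite hn (@big_cat_nat _ _ _ s0) //=; last exact: leq_addr.
rewrite big1_seq ?add0r; last first.
  move=> j /andP[_]; rewrite mem_index_iota => /andP[_ hj].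
  rewrite big1_seq ?mul0r //.
  move=> s /andP[_]; rewrite mem_index_iota => /andP[_ hs].
  by rewrite h0 ?mulr0.
rewrite -{1}[s0]add0n big_addn.
have -> : s0 + R - s0 = R by lia.
done.
Qed.

Lemma count_mod R a q : a < R ->
  count (fun k => k %% R == a) (iota 0 (q * R)) = q.
Proof.
move=> ha; elim: q => [|q IH]; first by [].
rewrite mulSnr iotaD count_cat IH add0n.
have -> : iota (q * R) R = map (addn (q * R)) (iota 0 R) by rewrite -iotaDl addn0.
rewrite count_map.
rewrite (@eq_in_count _ _ (pred1 a)); last first.
  move=> k; rewrite mem_iota add0n => /andP[_ hk] /=.
  by rewrite modnMDl modn_small.
by rewrite (count_uniq_mem _ (iota_uniq 0 R)) mem_iota add0n ha addn1.
Qed.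

Lemma F2_nat (b : bool) : ((b%:R)%R != 0%R :> 'F_2) = b.
Proof. by case: b; rewrite ?oner_eq0 ?eqxx. Qed.

Local Open Scope ring_scope.

Lemma sum_ord_nat n (a : 'I_n) (F : 'I_n -> 'F_2) :
  \sum_(j < n) F j = \sum_(0 <= t < n) F (insubd a t).
Proof. by rewrite big_mkord; apply: eq_bigr => j _; rewrite valKd. Qed.

Lemma count_part m r (A : {set 'I_(2 ^ m)}) (P : 'M['F_2]_(2 ^ m)) :
  (r <= m)%N -> upper_unitriangular P ->
  (forall j : 'I_(2 ^ m), (2 ^ m - 2 ^ r <= j)%N -> j \in A) ->
  (2 ^ r <= #|[set c in row_code (P *m GN m) A | wt c == 2 ^ (m - r)]|)%N.
Proof.
move=> hr [Plo Pd] hA.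
have hn : (0 < 2 ^ m)%N by rewrite expn_gt0.
have hR : (0 < 2 ^ r)%N by rewrite expn_gt0.
have hRn : (2 ^ r <= 2 ^ m)%N by apply: leq_pexp2l.
set s0 := (2 ^ m - 2 ^ r)%N.
have hns : (2 ^ m = s0 + 2 ^ r)%N by rewrite /s0 subnK.
pose o : 'I_(2 ^ m) := Ordinal hn.
pose PN := fun i j : nat => P (insubd o i) (insubd o j).
have vi : forall i, (i < 2 ^ m)%N -> val (insubd o i) = i.
  by move=> i hi; rewrite val_insubd hi.
pose Qm : 'M['F_2]_(2 ^ r) := \matrix_(s, t) PN (s + s0)%N (t + s0)%N.
pose M := Qm *m GN r.
have hM : M \in unitmx.
  rewrite unitmxE det_mulmx.
  have -> : \det Qm = 1.
    rewrite -det_tr det_trig; last first.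
      apply/is_trig_mxP => i j hij; rewrite !mxE /PN Plo //.
      move: (ltn_ord i) (ltn_ord j) => hi hj; rewrite !vi; lia.
    by apply: big1 => i _; rewrite !mxE /PN Pd.
  have -> : \det (GN r) = 1.
    rewrite det_trig; last by apply/is_trig_mxP => i j hij; rewrite mxE E_tri.
    by apply: big1 => i _; rewrite mxE E_diag.
  by rewrite mulr1 unitr1.
pose w := fun a : 'I_(2 ^ r) =>
  [ffun i : 'I_(2 ^ m) => if (s0 <= i)%N then ((delta_mx 0 a : 'rV['F_2]_(2 ^ r)) *m invmx M) 0 (insubd a (i - s0)%N) else 0 : 'F_2].
pose c := fun a : 'I_(2 ^ r) => \sum_(i in A) w a i *: row i (P *m GN m).
have hc : forall a (k : 'I_(2 ^ m)), c a 0 k = ((k %% 2 ^ r)%N == a)%:R.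
  move=> a k.
  rewrite code_entry.
  set ua := (delta_mx 0 a : 'rV['F_2]_(2 ^ r)) *m invmx M.
  pose uN := fun s : nat => ua 0 (insubd a s).
  pose wN := fun i : nat => w a (insubd o i).
  have e1 : forall l : 'I_(2 ^ m), \sum_(i in A) w a i * P i l = \sum_(0 <= i < 2 ^ m) wN i * PN i l.
    move=> l; rewrite big_mkord big_mkcond /=; apply: eq_bigr => i _.
    rewrite /wN /PN !valKd.
    case: ifP => // hiA; rewrite ffunE; case: ifP => hs; last by rewrite mul0r.
    by rewrite hA in hiA.
  under eq_bigr => l _ do rewrite e1.
  have e2 : forall l, \sum_(0 <= i < 2 ^ m) wN i * PN i l = \sum_(0 <= s < 2 ^ r) uN s * PN (s + s0)%N l.
    move=> l; apply: inner_shift => //.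
    - move=> i hi; rewrite /wN ffunE vi; last by lia.
      by have -> : (s0 <= i)%N = false by lia.
    - move=> s hs; rewrite /wN ffunE vi; last by lia.
      by rewrite leq_addl addnK.
  under eq_bigr => l _ do rewrite e2.
  rewrite -(big_mkord xpredT (fun l => (\sum_(0 <= s < 2 ^ r) uN s * PN (s + s0)%N l) * E m l k)).
  rewrite (@outer_shift _ s0 (2 ^ r) uN PN (fun l => E m l k) hns); last first.
    by move=> s l hs hl; rewrite /PN Plo // !vi; lia.
  have hkR : (k %% 2 ^ r < 2 ^ r)%N by rewrite ltn_mod.
  pose kR : 'I_(2 ^ r) := Ordinal hkR.
  have := mulmxKV hM (delta_mx 0 a : 'rV['F_2]_(2 ^ r)).
  rewrite -/ua => hu.
  have -> : ((k %% 2 ^ r)%N == a)%:R = (ua *m M) 0 kR :> 'F_2.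
    by rewrite hu mxE eqxx.
  rewrite /M mulmxA mxE (sum_ord_nat a).
  apply: eq_big_nat => t /andP[_ ht].
  have vt : val (insubd a t) = t by rewrite val_insubd ht.
  rewrite [GN r _ _]mxE vt /=.
  have Eb : E m (t + s0)%N k = E r t (k %% 2 ^ r) by rewrite addnC E_block // ltn_ord.
  congr (_ * _); last exact: Eb.
  rewrite mxE.
  rewrite (sum_ord_nat a).
  apply: eq_big_nat => s /andP[_ hs].
  have vs : val (insubd a s) = s by rewrite val_insubd hs.
  by rewrite [Qm _ _]mxE vs vt.
have hinj : injective c.
  move=> a b hab.
  have ha : (a < 2 ^ m)%N by apply: leq_trans (ltn_ord a) hRn.
  pose ka : 'I_(2 ^ m) := Ordinal ha.
  have := congr1 (fun x : 'rV_(2 ^ m) => x 0 ka) hab.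
  rewrite /= !hc /= modn_small ?ltn_ord // eqxx.
  case: (eqVneq (val a) (val b)) => [/val_inj //|hne].
  move=> h; have : (1 : 'F_2) = 0 by exact: h.
  by move/eqP; rewrite oner_eq0.
have -> : (2 ^ r = #|[set c a | a in 'I_(2 ^ r)]|)%N by rewrite card_imset // card_ord.
apply: subset_leq_card; apply/subsetP => x /imsetP[a _ ->].
rewrite inE; apply/andP; split.
  by rewrite inE; apply/existsP; exists (w a).
rewrite (wt_nat (f := fun k => ((k %% 2 ^ r)%N == a)%:R)); last by move=> k; rewrite hc.
rewrite /wtf (eq_count (a2 := fun k => (k %% 2 ^ r)%N == a)); last by move=> k; rewrite F2_nat.
have -> : (2 ^ m = 2 ^ (m - r) * 2 ^ r)%N by rewrite -expnD subnK.
by rewrite count_mod.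
Qed.
Local Open Scope ring_scope.

Lemma wt0 n : wt (0 : 'rV['F_2]_n) = 0%N.
Proof.
rewrite /wt; apply/eqP; rewrite cards_eq0; apply/eqP/setP => j.
by rewrite !inE mxE eqxx.
Qed.

Lemma row_in_code m (A : {set 'I_(2 ^ m)}) i : i \in A -> row i (GN m) \in row_code (GN m) A.
Proof.
move=> hi; rewrite inE; apply/existsP; exists [ffun j => (j == i)%:R].
rewrite (bigD1 i) //= ffunE eqxx scale1r big1 ?addr0 //.
by move=> j /andP[_ hj]; rewrite ffunE (negbTE hj) scale0r.
Qed.

Lemma row_nz m (i : 'I_(2 ^ m)) : row i (GN m) != 0.
Proof.
apply/eqP => h; have := congr1 (fun x : 'rV_(2 ^ m) => x 0 i) h.
by rewrite !mxE E_diag => /eqP; rewrite oner_eq0.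
Qed.

Lemma uut1 n : upper_unitriangular (1%:M : 'M['F_2]_n).
Proof.
split => [i j hij|i]; rewrite mxE ?eqxx //.
by have -> : (i == j) = false by apply/negbTE; rewrite neq_ltn hij orbT.
Qed.

Unset Implicit Arguments.

Theorem proposition5 (m r : nat) (A : {set 'I_(2 ^ m)}) (P : 'M['F_2]_(2 ^ m)) :
  (1 <= m)%N ->
  A != set0 ->
  decreasing [set mono_of_index i | i in A] ->
  (r <= m)%N ->
  has_min_dist (row_code (GN m) A) (2 ^ (m - r)) ->
  upper_unitriangular P ->
  has_min_dist (row_code (P *m GN m) A) (2 ^ (m - r)) /\
  (2 ^ r <= #|[set c in row_code (P *m GN m) A | wt c == 2 ^ (m - r)]|)%N.
Proof.
move=> hm hA hdec hr [[c0 hc0 /andP[c0nz /eqP c0w]] hmin] hP.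
have [i0 hi0A hi0w] : exists2 i0, i0 \in A & (wt (row i0 (GN m)) <= wt c0)%N.
  apply: (K (P' := 1%:M)) => //; first exact: uut1.
  by rewrite mul1mx.
have hw0 : wt (row i0 (GN m)) = (2 ^ (m - r))%N.
  apply/eqP; rewrite eqn_leq -{1}c0w hi0w /=.
  by apply: hmin; [exact: row_in_code | exact: row_nz].
have hpop : pop m i0 = (m - r)%N.
  move: hw0; rewrite (wt_nat (f := E m i0)); last by move=> k; rewrite !mxE.
  by rewrite wt_row ?ltn_ord // => /eqP; rewrite eqn_exp2l // => /eqP.
have hpm : (pop m i0 <= m)%N by rewrite /pop -[X in (_ <= X)%N](size_iota 0 m) count_size.
have hcard : #|mono_of_index i0| = r by rewrite mono_card hpop; lia.
have hn : (0 < 2 ^ m)%N by rewrite expn_gt0.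
have hR : (0 < 2 ^ r)%N by rewrite expn_gt0.
have hs : (2 ^ m - 2 ^ r < 2 ^ m)%N by lia.
pose istar : 'I_(2 ^ m) := Ordinal hs.
have hmi : mono_of_index istar = [set k : 'I_m | (k < r)%N] by apply: mono_istar.
have inA : forall j : 'I_(2 ^ m), mono_of_index j \in [set mono_of_index i | i in A] -> j \in A.
  by move=> j /imsetP[i hi /mono_index_inj ->].
have histar : istar \in A.
  apply: inA; apply: (hdec (mono_of_index i0)); first by apply: imset_f.
  exists (mono_of_index i0); rewrite hmi le_sh_low //=.
  exact: subxx.
have htop : forall j : 'I_(2 ^ m), (2 ^ m - 2 ^ r <= j)%N -> j \in A.
  move=> j hj; apply: inA; apply: (hdec (mono_of_index istar)); first by apply: imset_f.
  exists (mono_of_index j); rewrite le_sh_refl /= /le_w hmi.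
  exact: mono_top.
have hcnt := count_part hr hP htop.
split=> //; split.
  have : (0 < #|[set c in row_code (P *m GN m) A | wt c == 2 ^ (m - r)]|)%N.
    by apply: leq_trans hcnt; rewrite expn_gt0.
  rewrite card_gt0 => /set0Pn[c]; rewrite inE => /andP[hc /eqP hcw].
  exists c => //; rewrite hcw eqxx andbT.
  apply/eqP => c0'; move: hcw; rewrite c0' wt0 => /esym/eqP; rewrite expn_eq0.
  done.
move=> c hc hcnz.
have [i1 hi1A hi1w] := K hP hc hcnz.
apply: leq_trans hi1w.
by apply: hmin; [exact: row_in_code | exact: row_nz].
Qed.
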